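(* For every two finite simple graphs $G$ and $H$ without isolated vertices, $$\gamma_{tR}(G\times H)\le \min\{\omega(g)\omega(h)-2|A_2||B_2|\},$$ where the minimum is taken over all total Roman dominating functions $g=(A_0,A_1,A_2)$ on $G$ and $h=(B_0,B_1,B_2)$ on $H$.
   Context: For a graph $G$ without isolated vertices, a total Roman dominating function is a map $f:V(G)\to\{0,1,2\}$, written $f=(V_0,V_1,V_2)$ with $V_i=\{v:f(v)=i\}$, such that every vertex in $V_0$ has a neighbor in $V_2$ and the subgraph induced by $V_1\cup V_2$ has no isolated vertices. Its weight is $\omega(f)=\sum_v f(v)$; $\gamma_{tR}(G)$ is the minimum weight of a total Roman dominating function. The direct product $G\times H$ has vertex set $V(G)\times V(H)$, with $(g,h)(g',h')$ an edge iff $gg'\in E(G)$ and $hh'\in E(H)$. *)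

(* Defs.v *)
From mathcomp Require Import all_boot.
Set Implicit Arguments. Unset Strict Implicit. Unset Printing Implicit Defensive.

Definition simple_graph (V : finType) (e : rel V) : Prop :=
  symmetric e /\ irreflexive e.

Definition no_isolated (V : finType) (e : rel V) : Prop :=
  forall v : V, exists u : V, e v u.

Definition lab (V : finType) := {ffun V -> 'I_3}.

Definition Vi (V : finType) (f : lab V) (i : nat) : {set V} :=
  [set v | nat_of_ord (f v) == i].

Definition is_trdf (V : finType) (e : rel V) (f : lab V) : bool :=
  [forall v, (nat_of_ord (f v) == 0) ==> [exists u, e v u && (nat_of_ord (f u) == 2)]]
  && [forall v, (nat_of_ord (f v) != 0) ==> [exists u, e v u && (nat_of_ord (f u) != 0)]].

Definition weight (V : finType) (f : lab V) : nat := \sum_(v : V) nat_of_ord (f v).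

(* gamma_tR: minimum weight over all TRDFs (default 2|V| = weight of constant 2,
   which is a TRDF when there are no isolated vertices). *)
Definition gamma_tR (V : finType) (e : rel V) : nat :=
  \big[minn/(2 * #|V|)%N]_(f : lab V | is_trdf e f) weight f.

Definition direct_prod (V W : finType) (e1 : rel V) (e2 : rel W) : rel (V * W) :=
  fun x y => e1 x.1 y.1 && e2 x.2 y.2.

(* Main.v *)
Require Import Defs.
From mathcomp Require Import all_boot.

Lemma bigmin_le_seq {T : eqType} {r : seq T} {P : pred T} {F : T -> nat} {x i0} :
  i0 \in r -> P i0 -> \big[minn/x]_(i <- r | P i) F i <= F i0.
Proof.
elim: r => [|a r IH] //= ; rewrite in_cons big_cons => /orP [/eqP <-|Hi] HP.
  by rewrite HP geq_minl.
case: (P a); last exact: IH.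
by apply: leq_trans (geq_minr _ _) (IH Hi HP).
Qed.

Lemma cardVi (V : finType) (g : lab V) :
  #|Vi g 2| = \sum_(x : V) (if nat_of_ord (g x) == 2 then 1 else 0).
Proof. by rewrite /Vi -sum1dep_card big_mkcond. Qed.

Lemma nbr_pos (V : finType) (e : rel V) (g : lab V) :
  no_isolated e -> is_trdf e g -> forall x, exists x', e x x' && (0 < g x').
Proof.
move=> Hn /andP [/forallP H0 /forallP H1] x.
case Hx: (nat_of_ord (g x) == 0).
  have /existsP [u /andP [Hu /eqP Hu2]] := implyP (H0 x) Hx.
  by exists u; rewrite Hu Hu2.
have /existsP [u /andP [Hu Hu2]] := implyP (H1 x) (negbT Hx).
by exists u; rewrite Hu lt0n.
Qed.

Arguments nbr_pos {V e g}.

Theorem mainTheorem3 (V W : finType) (eG : rel V) (eH : rel W) :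
  simple_graph eG -> simple_graph eH ->
  no_isolated eG -> no_isolated eH ->
  forall (g : lab V) (h : lab W), is_trdf eG g -> is_trdf eH h ->
  gamma_tR (direct_prod eG eH) <= weight g * weight h - 2 * #|Vi g 2| * #|Vi h 2|.
Proof.
move=> _ _ nG nH g h tg th.
pose f : lab (V * W)%type := [ffun p => inord (minn 2 (g p.1 * h p.2)) : 'I_3].
have fE p : nat_of_ord (f p) = minn 2 (g p.1 * h p.2).
  by rewrite ffunE inordK // ltnS geq_minl.
have Hf : is_trdf (direct_prod eG eH) f.
  have [/forallP g0 _] := andP tg.
  have [/forallP h0 _] := andP th.
  apply/andP; split; apply/forallP => [[x y]]; apply/implyP; rewrite fE /=.
    move=> Hz.
    have : (g x == 0 :> nat) || (h y == 0 :> nat).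
      by case: (nat_of_ord (g x)) Hz => [|[|[|?]]] //; case: (nat_of_ord (h y)) => [|[|[|?]]].
    case/orP => Hz'.
      have /existsP [x' /andP [Hx' /eqP Hx'2]] := implyP (g0 x) Hz'.
      have [y' /andP [Hy' Hy'2]] := nbr_pos nH th y.
      apply/existsP; exists (x', y'); rewrite /direct_prod /= Hx' Hy' fE /= Hx'2.
      by apply/eqP/minn_idPl; rewrite leq_pmulr.
    have /existsP [y' /andP [Hy' /eqP Hy'2]] := implyP (h0 y) Hz'.
    have [x' /andP [Hx' Hx'2]] := nbr_pos nG tg x.
    apply/existsP; exists (x', y'); rewrite /direct_prod /= Hx' Hy' fE /= Hy'2.
    by apply/eqP/minn_idPl; rewrite leq_pmull.
  move=> Hnz.
  have [x' /andP [Hx' Hx'2]] := nbr_pos nG tg x.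
  have [y' /andP [Hy' Hy'2]] := nbr_pos nH th y.
  apply/existsP; exists (x', y'); rewrite /direct_prod /= Hx' Hy' fE /=.
  by rewrite -lt0n leq_min /= muln_gt0 Hx'2 Hy'2.
have Hw : weight f + 2 * #|Vi g 2| * #|Vi h 2| = weight g * weight h.
  have prodE (F : V -> nat) (G : W -> nat) :
      (\sum_x F x) * (\sum_y G y) = \sum_(p : V * W) F p.1 * G p.2.
    rewrite big_distrl /=.
    under eq_bigr => x _ do rewrite big_distrr /=.
    by rewrite pair_bigA.
  rewrite /weight !cardVi -mulnA prodE /= prodE big_distrr /=.
  rewrite -big_split /=; apply: eq_bigr => [[x y]] _ /=; rewrite fE.
  have := ltn_ord (g x); have := ltn_ord (h y).
  by case: (nat_of_ord (g x)) => [|[|[|?]]]; case: (nat_of_ord (h y)) => [|[|[|?]]].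
rewrite -Hw addnK.
apply: bigmin_le_seq => //; exact: mem_index_enum.
Qed.
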